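(* Let $m\ge 2$ and let $\Gamma$ be a strongly regular graph with smallest adjacency eigenvalue $-m$ which is not sporadic, i.e. $\Gamma$ is one of: (i) a complete multipartite graph $K_{a\times m}$ with $a\ge 2$ parts of size $m$; (ii) a Latin square graph $LS_m(n)$; (iii) the block graph of a Steiner system $S(2,m,mn+m-n)$. Then $E(\Gamma)=E(\bar\Gamma)$ if and only if $\Gamma\cong K_{m\times m}$ (imprimitive case) or $\Gamma$ is a Latin square graph $LS_m(n)$ for some $n\ge 2$ (primitive case).
   Context: A strongly regular graph with parameters $(n,k,e,d)$ is a $k$-regular simple graph on $n$ vertices, neither complete nor edgeless, in which adjacent vertices have $e$ common neighbours and distinct non-adjacent vertices have $d$ common neighbours. The Latin square graph $LS_m(n)$ is the graph of an orthogonal array $OA(n,m)$ (an $m\times n^2$ array over an $n$-set in which every pair of rows contains each ordered pair of symbols exactly once): vertices are the $n^2$ columns, two being adjacent iff they agree in exactly one row; it is strongly regular with parameters $(n^2, m(n-1), (m-1)(m-2)+n-2, m(m-1))$. The block graph of a Steiner system $S(2,m,v)$ has the blocks as vertices, two blocks adjacent iff they intersect. The energy $E(\Gamma)$ is the sum of the absolute values of the adjacency eigenvalues (with multiplicity); $\bar\Gamma$ is the complement. *)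

(* Defs.v *)
From mathcomp Require Import all_boot all_order all_algebra all_field.
Set Implicit Arguments. Unset Strict Implicit. Unset Printing Implicit Defensive.
Import Order.TTheory GRing.Theory Num.Theory.
Local Open Scope ring_scope.

Definition simple_graph (V : finType) (E : rel V) : Prop :=
  symmetric E /\ irreflexive E.

Definition compl_graph (V : finType) (E : rel V) : rel V :=
  fun x y => (x != y) && ~~ E x y.

Definition graph_iso (V W : finType) (E : rel V) (F : rel W) : Prop :=
  exists f : V -> W, bijective f /\ forall x y, F (f x) (f y) = E x y.

Definition is_srg (V : finType) (E : rel V) : Prop :=
  simple_graph E /\
  (exists x y, E x y) /\ (exists x y, (x != y) && ~~ E x y) /\
  exists k e d : nat,
    (forall x, #|[set y | E x y]| = k)%N /\
    (forall x y, E x y -> #|[set z | E x z && E y z]| = e)%N /\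
    (forall x y, x != y -> ~~ E x y -> #|[set z | E x z && E y z]| = d)%N.

Definition adjmx (V : finType) (E : rel V) : 'M[algC]_#|V| :=
  \matrix_(i, j) (E (enum_val i) (enum_val j))%:R.

Definition eigenvalues n (A : 'M[algC]_n) : seq algC :=
  sval (closed_field_poly_normal (char_poly A)).

Definition energy n (A : 'M[algC]_n) : algC :=
  \sum_(z <- eigenvalues A) `|z|.

Definition graph_energy (V : finType) (E : rel V) : algC := energy (adjmx E).

Definition smallest_eigenvalue n (A : 'M[algC]_n) (lam : algC) : Prop :=
  lam \in eigenvalues A /\ forall z, z \in eigenvalues A -> lam <= z.

Definition Kmult (a m : nat) : rel ('I_a * 'I_m) :=
  fun x y => x.1 != y.1.
Arguments Kmult : clear implicits.

(* orthogonal array OA(n,m): m rows, n^2 columns, symbols in 'I_n *)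
Definition is_OA (n m : nat) (O : 'I_m -> 'I_(n ^ 2) -> 'I_n) : Prop :=
  forall i j : 'I_m, i != j ->
    forall s t : 'I_n, exists! c : 'I_(n ^ 2), O i c = s /\ O j c = t.

Definition LS_graph (n m : nat) (O : 'I_m -> 'I_(n ^ 2) -> 'I_n) : rel 'I_(n ^ 2) :=
  fun c d => (c != d) && (#|[set i : 'I_m | O i c == O i d]| == 1)%N.

Definition steiner2 (m v : nat) (B : {set {set 'I_v}}) : Prop :=
  (forall b, b \in B -> #|b| = m) /\
  (forall x y : 'I_v, x != y -> exists! b, b \in B /\ x \in b /\ y \in b).

Definition blocks (v : nat) (B : {set {set 'I_v}}) := {b : {set 'I_v} | b \in B}.

Definition block_graph (v : nat) (B : {set {set 'I_v}}) : rel (blocks B) :=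
  fun b c => (b != c) && (val b :&: val c != set0).
Arguments block_graph : clear implicits.
Arguments block_graph {v} B.

(* Main.v *)
Require Import Defs.
From mathcomp Require Import all_boot all_order all_algebra all_field.
From mathcomp Require Import ring lra zify.
Set Implicit Arguments. Unset Strict Implicit. Unset Printing Implicit Defensive.
Import Order.TTheory GRing.Theory Num.Theory.
Local Open Scope ring_scope.

Section BaseSec.
Local Open Scope sesquilinear_scope.

Lemma charpoly_conj N (P D : 'M[algC]_N) : P \in unitmx ->
  char_poly (invmx P *m D *m P) = char_poly D.
Proof.
move=> Pu; rewrite /char_poly /char_poly_mx.
have -> : 'X%:M - map_mx polyC (invmx P *m D *m P) =
  map_mx polyC (invmx P) *m ('X%:M - map_mx polyC D) *m map_mx polyC P.
  rewrite mulmxBr mulmxBl -!map_mxM; congr (_ - _).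
  by rewrite scalar_mxC -mulmxA -map_mxM mulVmx // map_mx1 mulmx1.
rewrite !det_mulmx mulrC mulrA -det_mulmx -map_mxM mulmxV // map_mx1 det1 mul1r.
done.
Qed.

Lemma diag_subC N (d : 'rV[algC]_N) t :
  diag_mx d - t%:M = diag_mx (\row_i (d 0 i - t)).
Proof.
apply/matrixP => i j; rewrite !mxE; case: eqVneq => [->|_]; first by rewrite !mulr1n.
by rewrite !mulr0n subr0.
Qed.

Lemma energy_interp N (A : 'M[algC]_N) (t1 t2 t3 al be ga : algC) :
  A \is normalmx ->
  (A - t1%:M) *m ((A - t2%:M) *m (A - t3%:M)) = 0 ->
  (forall t, (t - t1) * ((t - t2) * (t - t3)) = 0 -> al + be * t + ga * t^+2 = `|t|) ->
  energy A = N%:R * al + be * \tr A + ga * \tr (A *m A).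
Proof.
move=> Anorm Hcub Hint; move/orthomx_spectralP: Anorm; set P := spectralmx A; set sp := spectral_diag A => HA.
have Pu : P \in unitmx := spectral_unit A.
set D := diag_mx sp.
have Hperm : perm_eq (eigenvalues A) [seq sp 0 i | i <- enum 'I_N].
  apply: prod_XsubC_eq; rewrite /eigenvalues; case: closed_field_poly_normal => /= s Hs.
  have /monicP Hm := char_poly_monic A.
  rewrite Hm scale1r in Hs; rewrite -Hs HA charpoly_conj // char_poly_trig ?diag_mx_is_trig //.
  rewrite big_map big_enum /=; apply: eq_bigr => i _; by rewrite mxE eqxx mulr1n.
have HAt t : A - t%:M = invmx P *m (D - t%:M) *m P.
  rewrite HA mulmxBr mulmxBl [invmx P *m t%:M]scalar_mxC.
  by rewrite -[t%:M *m _ *m P]mulmxA mulVmx // mulmx1.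
have HM X Y : (invmx P *m X *m P) *m (invmx P *m Y *m P) = invmx P *m (X *m Y) *m P.
  by rewrite !mulmxA -[_ *m P *m invmx P]mulmxA mulmxV // mulmx1.
have Htr X : \tr (invmx P *m X *m P) = \tr X.
  by rewrite mxtrace_mulC mulmxA mulmxV // mul1mx.
have Hroot i : (sp 0 i - t1) * ((sp 0 i - t2) * (sp 0 i - t3)) = 0.
  move: Hcub; rewrite !HAt !HM => Hc.
  have {}Hc : (D - t1%:M) *m ((D - t2%:M) *m (D - t3%:M)) = 0.
    have := congr1 (fun X => P *m X *m invmx P) Hc; rewrite /= mulmx0 mul0mx => <-.
    by rewrite !mulmxA mulmxV // mul1mx -[_ *m P *m invmx P]mulmxA mulmxV // mulmx1.
  move/matrixP: Hc => /(_ i i); rewrite /D !diag_subC !mul_diag_mx !mxE eqxx mulr1n.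
  by [].
rewrite /energy (perm_big _ Hperm) big_map big_enum /=.
under eq_bigr do rewrite -(Hint _ (Hroot _)).
rewrite HA HM !Htr /D mul_diag_mx mxtrace_diag /mxtrace.
rewrite !big_split /= sumr_const card_ord -!mulr_sumr mulr_natl.
congr (_ + _ + _); congr (_ * _); apply: eq_bigr => i _; by rewrite !mxE eqxx mulr1n.
Qed.
Lemma sum_boolR (T : finType) (P : pred T) :
  \sum_(z : T) ((P z)%:R : algC) = (#|[set z | P z]|)%:R.
Proof.
rewrite -natr_sum -sum1_card big_mkcond /=; congr _%:R.
rewrite [in RHS]big_mkcond /=; apply: eq_bigr => z _; rewrite inE; by case: (P z).
Qed.

Lemma sum_enum (T : finType) (F : T -> algC) :
  \sum_(l < #|T|) F (enum_val l) = \sum_z F z.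
Proof. by rewrite (reindex _ (onW_bij _ (enum_val_bij T))). Qed.

Section Adj.
Variables (V : finType) (E : rel V).
Hypothesis HE : simple_graph E.
Local Notation A := (adjmx E).
Local Notation J := (const_mx 1 : 'M[algC]_#|V|).
Local Notation ev := (@enum_val V _).

Lemma adjE i j : A i j = (E (enum_val i) (enum_val j))%:R.
Proof. by rewrite mxE. Qed.

Lemma adj_normal : A \is normalmx.
Proof.
apply/normalmxP.
have -> : A ^t* = A.
  apply/matrixP => i j; rewrite !mxE conjC_nat.
  by case: HE => Hs _; rewrite Hs.
done.
Qed.

Lemma adj_tr : \tr A = 0.
Proof.
rewrite /mxtrace; apply: big1 => i _; rewrite mxE.
by case: HE => _ Hi; rewrite Hi.
Qed.

Lemma adj_sq i j : (A *m A) i j =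
  (#|[set z | E (enum_val i) z && E (enum_val j) z]|)%:R.
Proof.
rewrite mxE -sum_boolR -(sum_enum (fun z => (E (enum_val i) z && E (enum_val j) z)%:R)).
apply: eq_bigr => l _; rewrite !mxE -natrM mulnb.
by case: HE => Hs _; rewrite (Hs _ (enum_val j)).
Qed.

Lemma adj_J k : (forall x, #|[set y | E x y]| = k)%N -> A *m J = k%:R *: J.
Proof.
move=> Hk; apply/matrixP => i j; rewrite !mxE mulr1.
rewrite -(Hk (enum_val i)) -sum_boolR -(sum_enum (fun z => (E (enum_val i) z)%:R)).
by apply: eq_bigr => l _; rewrite !mxE mulr1.
Qed.

Lemma J_adj k : (forall x, #|[set y | E x y]| = k)%N -> J *m A = k%:R *: J.
Proof.
move=> Hk; apply/matrixP => i j; rewrite !mxE mulr1.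
rewrite -(Hk (enum_val j)) -sum_boolR -(sum_enum (fun z => (E (enum_val j) z)%:R)).
apply: eq_bigr => l _; rewrite !mxE mul1r.
by case: HE => Hs _; rewrite Hs.
Qed.

Lemma adj_compl : adjmx (compl_graph E) = J - 1%:M - A.
Proof.
apply/matrixP => i j; rewrite !mxE /compl_graph.
case: (eqVneq i j) => [->|nij]; first by rewrite eqxx /=; case: HE => _ ->; rewrite subrr subr0.
have -> : (enum_val i != enum_val j) by apply: contra nij => /eqP/enum_val_inj ->.
by rewrite /= mulr0n subr0; case: (E _ _); rewrite /= ?subrr ?subr0.
Qed.

Lemma compl_simple : simple_graph (compl_graph E).
Proof.
case: HE => Hs Hi; split => [x y|x]; rewrite /compl_graph; last by rewrite eqxx.
by rewrite eq_sym Hs.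
Qed.

Lemma compl_deg k : (forall x, #|[set y | E x y]| = k)%N ->
  (forall x, #|[set y | compl_graph E x y]| = #|V| - 1 - k)%N.
Proof.
move=> Hk x.
have -> : [set y | compl_graph E x y] = ~: (x |: [set y | E x y]).
  by apply/setP => y; rewrite !inE /compl_graph negb_or eq_sym.
have := cardsC (x |: [set y | E x y]); rewrite cardsU1 inE Hk.
case: HE => _ ->; rewrite /= => <-; lia.
Qed.

Lemma tr_sq_reg k : (forall x, #|[set y | E x y]| = k)%N ->
  \tr (A *m A) = (#|V| * k)%:R.
Proof.
move=> Hk; rewrite /mxtrace; under eq_bigr do rewrite adj_sq.
have H (x : V) : [set z | E x z && E x z] = [set z | E x z].
  by apply/setP => z; rewrite !inE andbb.
under eq_bigr do rewrite H.
under eq_bigr do rewrite Hk.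
by rewrite sumr_const card_ord natrM mulrC mulr_natr.
Qed.

Lemma srg_sq k e d : (forall x, #|[set y | E x y]| = k)%N ->
    (forall x y, E x y -> #|[set z | E x z && E y z]| = e)%N ->
    (forall x y, x != y -> ~~ E x y -> #|[set z | E x z && E y z]| = d)%N ->
  A *m A = (k%:R)%:M + e%:R *: A + d%:R *: (J - 1%:M - A).
Proof.
move=> Hk He Hd; apply/matrixP => i j; rewrite adj_sq !mxE.
case: (eqVneq i j) => [->|nij].
  rewrite (_ : [set z | _ && _] = [set z | E (enum_val j) z]);
    last by apply/setP => z; rewrite !inE andbb.
  by rewrite Hk; case: HE => _ ->; rewrite /=; ring.
have nv : (enum_val i != enum_val j) by apply: contra nij => /eqP/enum_val_inj ->.
rewrite /=.
case Eij: (E _ _).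
  by rewrite He // /=; ring.
by rewrite Hd ?Eij // /=; ring.
Qed.

End Adj.

Lemma JJ N : (const_mx 1 : 'M[algC]_N) *m (const_mx 1 : 'M[algC]_N) = N%:R *: const_mx 1.
Proof.
apply/matrixP => i j; rewrite !mxE mulr1.
under eq_bigr do rewrite !mxE mulr1.
by rewrite sumr_const card_ord.
Qed.

Lemma trJ N : \tr (const_mx 1 : 'M[algC]_N) = N%:R.
Proof. by rewrite /mxtrace; under eq_bigr do rewrite mxE; rewrite sumr_const card_ord. Qed.

End BaseSec.

Lemma eigen_quad (V : finType) (E : rel V) (m k e d : nat) :
  simple_graph E ->
  (forall x, #|[set y | E x y]| = k)%N ->
  (forall x y, E x y -> #|[set z | E x z && E y z]| = e)%N ->
  (forall x y, x != y -> ~~ E x y -> #|[set z | E x z && E y z]| = d)%N ->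
  (0 < m)%N ->
  (- (m%:R)) \in eigenvalues (adjmx E) ->
  (m%:R)^+2 + (e%:R - d%:R) * m%:R - (k%:R - d%:R) = 0 :> algC.
Proof.
move=> HE Hk He Hd Hm Hin.
set A := adjmx E; set J := (const_mx 1 : 'M[algC]_#|V|).
have : eigenvalue A (- m%:R).
  rewrite eigenvalue_root_char; move: Hin; rewrite /eigenvalues.
  case: closed_field_poly_normal => s Hs /= Hin.
  by rewrite Hs (monicP (char_poly_monic A)) scale1r root_prod_XsubC.
move/eigenvalueP => [v Hv vnz].
have [j vj] : exists j, v 0 j != 0.
  apply/existsP; apply: contraR vnz => /existsPn H; apply/eqP/rowP => j.
  by rewrite mxE; apply/eqP/negbNE/H.
have HvJ : v *m J = 0.
  have H1 := congr1 (mulmx^~ J) Hv; rewrite /= -mulmxA (adj_J Hk) -scalemxAl -scalemxAr in H1.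
  have : (k%:R + m%:R) *: (v *m J) = 0.
    by rewrite -/J in H1; rewrite scalerDl H1 scaleNr addNr.
  move/eqP; rewrite scaler_eq0 => /orP[|/eqP//].
  by rewrite -natrD pnatr_eq0 => /eqP; lia.
have H2 : v *m (A *m A) = v *m ((k%:R)%:M + e%:R *: A + d%:R *: (J - 1%:M - A)) by rewrite -(srg_sq HE Hk He Hd).
rewrite mulmxA Hv -scalemxAl Hv scalerA !mulmxDr -!scalemxAr in H2.
rewrite !mulmxBr in H2. rewrite mul_mx_scalar Hv HvJ mulmx1 in H2.
move/matrixP: H2 => /(_ 0 j); rewrite !mxE /= => H3.
move/eqP: H3; rewrite -subr_eq0 => /eqP H3.
apply: (mulIf vj); rewrite mul0r -H3; ring.
Qed.

Lemma srg_count (V : finType) (E : rel V) (k e d : nat) (x0 : V) :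
  simple_graph E ->
  (forall x, #|[set y | E x y]| = k)%N ->
  (forall x y, E x y -> #|[set z | E x z && E y z]| = e)%N ->
  (forall x y, x != y -> ~~ E x y -> #|[set z | E x z && E y z]| = d)%N ->
  (k%:R)^+2 = k%:R + e%:R * k%:R + d%:R * (#|V|%:R - 1 - k%:R) :> algC.
Proof.
move=> HE Hk He Hd.
set A := adjmx E; set J := (const_mx 1 : 'M[algC]_#|V|).
have H := congr1 (mulmx^~ J) (srg_sq HE Hk He Hd).
rewrite /= -mulmxA (adj_J Hk) -scalemxAr (adj_J Hk) scalerA in H.
rewrite !mulmxDl -!scalemxAl !mulmxBl mul_scalar_mx (adj_J Hk) mul1mx JJ in H.
move/matrixP: H => /(_ (enum_rank x0) (enum_rank x0)); rewrite !mxE => H.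
rewrite expr2 -[k%:R * k%:R]mulr1 H; ring.
Qed.

Lemma srg_energy_iff (V : finType) (E : rel V) (m k e d : nat) (r : algC) :
  simple_graph E ->
  (forall x, #|[set y | E x y]| = k)%N ->
  (forall x y, E x y -> #|[set z | E x z && E y z]| = e)%N ->
  (forall x y, x != y -> ~~ E x y -> #|[set z | E x z && E y z]| = d)%N ->
  (2 <= m)%N ->
  (- (m%:R)) \in eigenvalues (adjmx E) ->
  (k.+2 <= #|V|)%N ->
  r * (m%:R * (#|V|%:R - 1) - k%:R) = k%:R * (#|V|%:R - k%:R - m%:R) ->
  0 <= r ->
  (graph_energy E = graph_energy (compl_graph E) <->
   k%:R * (#|V|%:R + r - k%:R) = (#|V|%:R - 1 - k%:R) * (m%:R + k%:R)).
Proof.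
move=> HE Hk He Hd Hm Hin HkN Hr hr.
have /card_gt0P [x0 _] : (0 < #|V|)%N by lia.
have hle : (1 + k <= #|V|)%N by lia.
have hle1 : (1 <= m)%N by lia.
have Q1 := eigen_quad HE Hk He Hd (ltnW Hm) Hin.
have Q2 := srg_count x0 HE Hk He Hd.
set N : algC := #|V|%:R in Hr Q2 *.
set K : algC := k%:R in Hr Q1 Q2 *.
set M : algC := m%:R in Hr Q1 *.
set e' : algC := e%:R in Q1 Q2.
set d' : algC := d%:R in Q1 Q2.
have hM : 0 < M by rewrite ltr0n; lia.
have hN : 0 < N by rewrite ltr0n; lia.
have hK : 0 <= K by rewrite ler0n.
have hNK : 0 < N - K by rewrite -natrB ?ltr0n; lia.
set D := M * (N - 1) - K in Hr.
have hD : D != 0.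
  have -> : D = (m * (#|V| - 1) - k)%:R by rewrite natrB ?natrM ?natrB //; nia.
  by rewrite pnatr_eq0; nia.
have E1 : d' * D = K * (M - 1) * (K + M).
  apply/eqP; rewrite -subr_eq0; apply/eqP.
  transitivity (- (M * (K ^+ 2 - (K + e' * K + d' * (N - 1 - K)))
                  + K * (M ^+ 2 + (e' - d') * M - (K - d')))); first by rewrite /D; ring.
  by rewrite Q1 -Q2 subrr; ring.
have hd : d' = K - M * r.
  apply: (mulIf hD); rewrite E1 mulrBl -[M * r * D]mulrA Hr /D; ring.
have he : e' = d' + r - M.
  have hM0 : M != 0 by rewrite lt0r_neq0.
  apply: (mulfI hM0); apply/eqP; rewrite -subr_eq0; apply/eqP; rewrite -Q1 hd; ring.
set A := adjmx E; set J := (const_mx 1 : 'M[algC]_#|V|).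
have HA2 := srg_sq HE Hk He Hd; rewrite -/A -/J -/K -/e' -/d' in HA2.
have HAJ := adj_J Hk; rewrite -/A -/J -/K in HAJ.
have HJA := J_adj HE Hk; rewrite -/A -/J -/K in HJA.
have HJJ := JJ #|V|; rewrite -/J -/N in HJJ.
have HQ : (A - r%:M) *m (A - (- M)%:M) = d' *: J.
  rewrite mulmxBl !mulmxBr HA2 mul_mx_scalar mul_scalar_mx mul_scalar_mx.
  apply/matrixP => i j; rewrite !mxE he hd.
  by case: (i == j); rewrite /=; ring.
have hMr : 0 < M + r by rewrite ltr_wpDr.
have hMK : 0 < M + K by rewrite ltr_wpDr.
have hrM : 0 < r + M by rewrite addrC.
have h1r : 0 < 1 + r by rewrite ltr_wpDr.
have hNrK : 0 < N + r - K by rewrite addrAC ltr_wpDr.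
have hN0 : N != 0 by rewrite pnatr_eq0; lia.
set g := 2 * M / ((M + K) * (M + r)).
have EA : graph_energy E = N * (g * K * r) + (1 - g * (K + r)) * 0 + g * (N * K).
  rewrite /graph_energy -/A -(adj_tr HE) -/A -natrM -(tr_sq_reg HE Hk) -/A.
  apply: (energy_interp (t1 := K) (t2 := r) (t3 := - M)).
  - exact: adj_normal.
  - by rewrite HQ -scalemxAr mulmxBl HAJ mul_scalar_mx subrr scaler0.
  - move=> t /eqP; rewrite !mulf_eq0 !subr_eq0 => /orP[/eqP->|/orP[/eqP->|/eqP->]].
    + rewrite normr_nat /g; field.
      by rewrite (lt0r_neq0 hMr) (lt0r_neq0 hMK).
    + rewrite ger0_norm // /g; field.
      by rewrite (lt0r_neq0 hMr) (lt0r_neq0 hMK).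
    + rewrite normrN normr_nat /g; field.
      by rewrite (lt0r_neq0 hMr) (lt0r_neq0 hMK).
set kb := (#|V| - 1 - k)%N.
have hKb : kb%:R = N - 1 - K by rewrite /kb -subnDA (natrB _ hle) natrD opprD addrA.
have hm1 : (m - 1)%:R = M - 1 by rewrite (natrB _ hle1).
set g2 := 2 * (1 + r) / ((r + M) * (N + r - K)).
have HEc := compl_simple HE.
have EB : graph_energy (compl_graph E) =
    N * (g2 * kb%:R * (M - 1)) + (1 - g2 * (kb%:R + (M - 1))) * 0 + g2 * (N * kb%:R).
  rewrite /graph_energy -(adj_tr HEc) -natrM -(tr_sq_reg HEc (compl_deg HE Hk)).
  apply: (energy_interp (t1 := kb%:R) (t2 := - 1 - r) (t3 := M - 1)).
  - exact: adj_normal.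
  - rewrite (adj_compl HE) -/A -/J.
    have -> : J - 1%:M - A - (-1 - r)%:M = J - (A - r%:M).
      by apply/matrixP => i j; rewrite !mxE; case: (i == j); rewrite /=; ring.
    have -> : J - 1%:M - A - (M - 1)%:M = J - (A - (- M)%:M).
      by apply/matrixP => i j; rewrite !mxE; case: (i == j); rewrite /=; ring.
    have -> : J - 1%:M - A - kb%:R%:M = J - N%:M - (A - K%:M).
      by apply/matrixP => i j; rewrite !mxE hKb; case: (i == j); rewrite /=; ring.
    have -> : (J - (A - r%:M)) *m (J - (A - (- M)%:M)) = (N - K - M - (K - r) + d') *: J.
      rewrite mulmxBl [(A - r%:M) *m _]mulmxBr HQ [J *m _]mulmxBr HJJ.
      rewrite [J *m (A - _)]mulmxBr mulmxBl HJA HAJ mul_mx_scalar mul_scalar_mx.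
      by apply/matrixP => i j; rewrite !mxE; ring.
    rewrite -scalemxAr !mulmxBl HJJ HAJ !mul_scalar_mx.
    by apply/matrixP => i j; rewrite !mxE; ring.
  - move=> t /eqP; rewrite !mulf_eq0 !subr_eq0 => /orP[/eqP->|/orP[/eqP->|/eqP->]].
    + rewrite normr_nat /g2 hKb; field.
      by rewrite (lt0r_neq0 hNrK) (lt0r_neq0 hrM).
    + rewrite -opprD normrN ger0_norm ?ltW // /g2 hKb; field.
      by rewrite (lt0r_neq0 hNrK) (lt0r_neq0 hrM).
    + rewrite -hm1 normr_nat hm1 /g2 hKb; field.
      by rewrite (lt0r_neq0 hNrK) (lt0r_neq0 hrM).
set c := 2 * N * M * (1 + r) / ((M + r) * (M + K) * (N + r - K)).
have hM0 : M != 0 by rewrite lt0r_neq0.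
have hc : c != 0.
  rewrite /c mulf_neq0 // ?invr_eq0 ?mulf_neq0 ?lt0r_neq0 //.
set X := K * (N + r - K) - (N - 1 - K) * (M + K).
have key : graph_energy E - graph_energy (compl_graph E) = c * X.
  rewrite EA EB /c /X /g /g2 hKb; field.
  by rewrite (lt0r_neq0 hNrK) (lt0r_neq0 hMr) (lt0r_neq0 hMK).
split => [H|H].
  apply/eqP; rewrite -subr_eq0 -/X; move: key; rewrite H subrr => /esym/eqP.
  by rewrite mulf_eq0 (negbTE hc).
by apply/eqP; rewrite -subr_eq0 key /X H subrr mulr0.
Qed.

Section Comb.
Local Close Scope ring_scope.
Lemma card_sumb (T : finType) (P : pred T) : #|[set d | P d]| = \sum_(d : T) (P d : nat).
Proof.
rewrite -sum1_card big_mkcond /=; apply: eq_bigr => d _; rewrite inE; by case: (P d).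
Qed.

Section Steiner.
Variables (m n v : nat) (B : {set {set 'I_v}}).
Hypothesis hm : (2 <= m)%N.
Hypothesis HB : steiner2 m B.
Hypothesis Hv : (v - 1 = (m - 1) * (n + 1))%N.

Lemma st_uniq b c x y : b \in B -> c \in B -> x != y -> x \in b -> y \in b ->
  x \in c -> y \in c -> b = c.
Proof.
move=> bB cB nxy xb yb xc yc; case: HB => _ /(_ x y nxy) [b0 [_ Hu]].
by rewrite -(Hu b) ?(Hu c).
Qed.

Lemma st_pair x y : x != y ->
  (\sum_(b : {set 'I_v}) ((b \in B) && (x \in b) && (y \in b) : nat) = 1)%N.
Proof.
move=> nxy; case: HB => _ /(_ x y nxy) [b0 [[b0B [xb0 yb0]] Hu]].
rewrite (bigD1 b0) ?b0B ?xb0 ?yb0 //= big1 // => b nb.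
case: (boolP ((b \in B) && (x \in b) && (y \in b))) => //= /andP [/andP [bB xb] yb].
by move: nb; rewrite (Hu b) ?eqxx.
Qed.

Lemma st_rep x : #|[set b | (b \in B) && (x \in b)]| = (n + 1)%N.
Proof.
have H1 : #|[set y : 'I_v | y != x]| = (v - 1)%N.
  have -> : [set y : 'I_v | y != x] = [set~ x] by apply/setP => y; rewrite !inE.
  by rewrite cardsC1 card_ord subn1.
have H2 : #|[set y : 'I_v | y != x]| =
    (\sum_(b in [set b | (b \in B) && (x \in b)]) (m - 1))%N.
  rewrite card_sumb.
  transitivity (\sum_(y : 'I_v) \sum_(b in [set b | (b \in B) && (x \in b)])
     ((y \in b) && (y != x) : nat))%N.
    apply: eq_bigr => y _.
    case: (eqVneq y x) => [->|nyx] /=; first by rewrite big1 // => b _; rewrite andbF.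
    rewrite -(st_pair (x := x) (y := y)) 1?eq_sym //.
    rewrite [in RHS]big_mkcond /=; apply: eq_bigr => b _; rewrite inE andbT.
    by case: (b \in B); case: (x \in b); case: (y \in b).
  rewrite exchange_big /=; apply: eq_bigr => b; rewrite inE => /andP [bB xb].
  case: HB => Hm _; rewrite -(Hm b bB) (cardsD1 x b) xb add1n subn1 /= card_sumb.
  by apply: eq_bigr => y _; rewrite !inE andbC.
rewrite sum_nat_const in H2.
have : (#|[set b | (b \in B) && (x \in b)]| * (m - 1) = (n + 1) * (m - 1))%N.
  by rewrite -H2 H1 Hv mulnC.
move/eqP; rewrite eqn_mul2r => /orP [/eqP|/eqP //]; lia.
Qed.

Lemma st_card : (#|{: blocks B}| * m = v * (n + 1))%N.
Proof.
rewrite card_sig -sum_nat_const.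
transitivity (\sum_(b in [pred b | b \in B]) \sum_(x : 'I_v) (x \in b : nat))%N.
  apply: eq_bigr => b bB; case: HB => Hm _; rewrite -(Hm b bB) -sum1_card.
  by rewrite big_mkcond; apply: eq_bigr => x _; case: (x \in b).
rewrite exchange_big /=.
transitivity (\sum_(x : 'I_v) (n + 1))%N; last by rewrite sum_nat_const card_ord.
apply: eq_bigr => x _; rewrite -(st_rep x) card_sumb big_mkcond /=.
by apply: eq_bigr => b _; rewrite inE; case: (b \in B).
Qed.

Lemma st_deg (b0 : blocks B) : #|[set c | block_graph B b0 c]| = (m * n)%N.
Proof.
set b := val b0; have bB : b \in B := valP b0.
have -> : #|[set c | block_graph B b0 c]| =
    #|[set c | (c \in B) && (b != c) && (b :&: c != set0)]|.
  rewrite -(card_imset _ val_inj); apply: eq_card => c; rewrite [in RHS]inE.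
  apply/imsetP/idP => [[c0]|/andP [/andP [cB nbc] Hbc]].
    by rewrite inE /block_graph => /andP [H1 H2] ->; rewrite (valP c0) /b val_eqE H1 H2.
  by exists (exist _ c cB); rewrite // inE /block_graph /= Hbc andbT.
rewrite card_sumb.
transitivity (\sum_(c : {set 'I_v}) \sum_(x in b) ((c \in B) && (b != c) && (x \in c) : nat))%N.
  apply: eq_bigr => c _.
  case: (boolP ((c \in B) && (b != c))) => [/andP [cB nbc]|H]; last first.
    by rewrite /= big1.
  rewrite /=.
  have Hle : (#|[set x in b | x \in c]| <= 1)%N.
    apply/card_le1_eqP => x y; rewrite !inE => /andP [xb xc] /andP [yb yc].
    case: (eqVneq x y) => // nxy.
    by move: nbc; rewrite (st_uniq bB cB nxy xb yb xc yc) eqxx.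
  have -> : (b :&: c != set0) = (0 < #|[set x in b | x \in c]|)%N.
    rewrite card_gt0; congr (~~ (_ == _)); apply/setP => x; rewrite !inE.
  rewrite card_sumb [in RHS]big_mkcond /=.
  have : (\sum_(x : 'I_v) ((x \in b) && (x \in c) : nat) <= 1)%N.
    by move: Hle; rewrite card_sumb.
  rewrite [in RHS](eq_bigr (fun x => ((x \in b) && (x \in c) : nat))); last by move=> x _; case: (x \in b).
  by case: (\sum_(x : 'I_v) _)%N => [|[]].
rewrite exchange_big /=.
transitivity (\sum_(x in b) n)%N; last first.
  by rewrite sum_nat_const; case: HB => Hm _; rewrite (Hm b bB).
apply: eq_bigr => x xb.
have := st_rep x; rewrite card_sumb (bigD1 b) //= bB xb /= add1n => /eqP; rewrite addn1 eqSS => /eqP <-.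
rewrite (bigD1 b) //= eqxx andbF /= add0n.
by apply: eq_bigr => c ncb; rewrite eq_sym ncb andbT.
Qed.
End Steiner.

Lemma OA_uniq n m (O : 'I_m -> 'I_(n ^ 2) -> 'I_n) (i j : 'I_m) c d :
  is_OA O -> i != j -> O i c = O i d -> O j c = O j d -> c = d.
Proof.
move=> HO nij Hi Hj; have [c0 [_ Hu]] := HO i j nij (O i c) (O j c).
by rewrite -(Hu c) ?(Hu d) -?Hi -?Hj.
Qed.

Lemma OA_row n m (O : 'I_m -> 'I_(n ^ 2) -> 'I_n) (i : 'I_m) s :
  (2 <= m)%N -> is_OA O -> #|[set d | O i d == s]| = n.
Proof.
move=> hm HO.
have [j nij] : exists j : 'I_m, i != j.
  case: (eqVneq (val i) 0%N) => Hi.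
    exists (Ordinal hm); apply/eqP => /(congr1 val) /=; rewrite Hi.
    done.
  exists (Ordinal (ltn_trans (ltnSn 0) hm)); apply/eqP => /(congr1 val) /=.
  by move/eqP: Hi.
rewrite -(card_in_imset (f := O j)).
  have -> : [set O j d | d in [set d | O i d == s]] = setT.
    apply/setP => t; rewrite inE; apply/imsetP.
    have [c0 [[H1 H2] _]] := HO i j nij s t.
    by exists c0; rewrite ?inE ?H1.
  by rewrite cardsT card_ord.
move=> c d; rewrite !inE => /eqP Hc /eqP Hd Hj.
by apply: (OA_uniq HO nij); rewrite ?Hc ?Hd.
Qed.

Lemma LS_deg n m (O : 'I_m -> 'I_(n ^ 2) -> 'I_n) : (2 <= m)%N -> is_OA O ->
  forall c, #|[set d | LS_graph O c d]| = (m * (n - 1))%N.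
Proof.
move=> hm HO c.
have Hle1 d : c != d -> (#|[set i : 'I_m | O i c == O i d]| <= 1)%N.
  move=> ncd; apply/card_le1_eqP => i j; rewrite !inE => /eqP Hi /eqP Hj.
  case: (eqVneq i j) => // nij.
  by move: ncd; rewrite (OA_uniq HO nij Hi Hj) eqxx.
rewrite card_sumb.
transitivity (\sum_(d : 'I_(n ^ 2)) \sum_(i : 'I_m) ((c != d) && (O i c == O i d) : nat)).
  apply: eq_bigr => d _; rewrite /LS_graph.
  case: (eqVneq c d) => [<-|ncd] /=; first by rewrite big1.
  rewrite card_sumb; have := Hle1 d ncd; rewrite card_sumb.
  by case: (\sum_(i : 'I_m) _)%N => [|[]].
rewrite exchange_big /=.
transitivity (\sum_(i : 'I_m) (n - 1))%N; last by rewrite sum_nat_const card_ord.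
apply: eq_bigr => i _.
have := @OA_row n m O i (O i c) hm HO; rewrite card_sumb.
rewrite (bigD1 c) //= eqxx /= => Hs.
rewrite (bigD1 c) //= eqxx /= add0n.
transitivity (\sum_(d < n ^ 2 | d != c) (O i d == O i c : nat)).
  by apply: eq_bigr => d ncd; rewrite eq_sym ncd /= eq_sym.
move: Hs; set X := (\sum_(d < n ^ 2 | d != c) _)%N; lia.
Qed.

Lemma steiner_card m n (B : {set {set 'I_(m * n + m - n)}}) : (2 <= m)%N -> steiner2 m B ->
  (#|{: blocks B}| * m = (m * n + m - n) * (n + 1))%N.
Proof.
move=> hm HB; apply: (st_card hm HB).
nia.
Qed.

Lemma steiner_deg m n (B : {set {set 'I_(m * n + m - n)}}) : (2 <= m)%N -> steiner2 m B ->
  forall b, #|[set c | block_graph B b c]| = (m * n)%N.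
Proof.
move=> hm HB b; apply: (st_deg hm HB).
nia.
Qed.
End Comb.

Lemma iso_card (V W : finType) (E : rel V) (F : rel W) :
  graph_iso E F -> #|V| = #|W|.
Proof. by case=> f [fb _]; exact: bij_eq_card fb. Qed.

Lemma iso_deg (V W : finType) (E : rel V) (F : rel W) :
  graph_iso E F -> forall x, exists y, #|[set z | E x z]| = #|[set z | F y z]|.
Proof.
case=> f [fb Hf] x; exists (f x).
have -> : [set z | F (f x) z] = f @: [set z | E x z].
  apply/setP => z; case: fb => g fg gf.
  rewrite inE; apply/idP/imsetP => [H|[w]].
    by exists (g z); [rewrite inE -Hf gf | rewrite gf].
  by rewrite inE => Hw ->; rewrite Hf.
by rewrite card_imset //; apply: bij_inj.
Qed.

Lemma Kmult_card a m : #|{: 'I_a * 'I_m}| = (a * m)%N.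
Proof. by rewrite card_prod !card_ord. Qed.

Lemma Kmult_deg a m (x : 'I_a * 'I_m) : #|[set y | Kmult a m x y]| = ((a - 1) * m)%N.
Proof.
have -> : [set y | Kmult a m x y] = setX [set~ x.1] setT.
  by apply/setP => y; rewrite !inE /Kmult andbT eq_sym.
by rewrite cardsX cardsC1 cardsT !card_ord subn1.
Qed.

Lemma srg_kbound (V : finType) (E : rel V) k x y :
  simple_graph E -> (forall x, #|[set z | E x z]| = k)%N -> x != y -> ~~ E x y ->
  (k.+2 <= #|V|)%N.
Proof.
move=> [Hs Hi] Hk nxy nE.
have Hsub : [set z | E x z] \subset ~: [set x; y].
  apply/subsetP => z; rewrite !inE negb_or => Ez.
  apply/andP; split; apply/eqP => Hz; rewrite Hz in Ez; first by rewrite Hi in Ez.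
  by rewrite Ez in nE.
have := subset_leq_card Hsub; rewrite Hk.
have := cardsC [set x; y]; rewrite cards2 nxy => <-; lia.
Qed.

Lemma steiner_nat m n N k t : (2 <= m)%N -> (k.+2 <= N)%N -> (N * m = (m * n + m - n) * (n + 1))%N -> k = (m*n)%N -> m = (n + 1 + t)%N -> False.
Proof.
move=> hm hk2 HNB Hk' Ht.
have h1 : ((m*n).+2 * m <= N * m)%N by rewrite leq_mul2r -Hk' hk2 orbT.
rewrite HNB in h1.
have h2 : (m * n + m - n = m*n + t + 1)%N by rewrite Ht; lia.
rewrite h2 Ht in h1.
have h3 : (n * t <= (n + 1 + t) * n * t)%N by rewrite leq_mul2r leq_pmull ?orbT //; lia.
lia.
Qed.

Theorem mainTheorem10 (m : nat) (hm : (2 <= m)%N) (V : finType) (E : rel V)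
  (Hsrg : is_srg E)
  (Hmin : smallest_eigenvalue (adjmx E) (- (m%:R)))
  (Hclass :
     (exists a : nat, (2 <= a)%N /\ graph_iso E (Kmult a m)) \/
     (exists (n : nat) (O : 'I_m -> 'I_(n ^ 2) -> 'I_n),
        is_OA O /\ graph_iso E (LS_graph O)) \/
     (exists (n : nat) (B : {set {set 'I_(m * n + m - n)}}),
        steiner2 m B /\ graph_iso E (block_graph B))) :
  graph_energy E = graph_energy (compl_graph E) <->
  (graph_iso E (Kmult m m) \/
   exists (n : nat) (O : 'I_m -> 'I_(n ^ 2) -> 'I_n),
     (2 <= n)%N /\ is_OA O /\ graph_iso E (LS_graph O)).
Proof.
case: Hsrg => HE [[x1 [y1 Exy1]] [[x2 [y2 /andP [nxy2 nE2]]] [k [e [d [Hk [He Hd]]]]]]].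
have hk2 : (k.+2 <= #|V|)%N := srg_kbound HE Hk nxy2 nE2.
have hk1 : (0 < k)%N.
  rewrite -(Hk x1); apply/card_gt0P; exists y1; by rewrite inE.
have key := fun r Hr hr => @srg_energy_iff V E m k e d r HE Hk He Hd hm Hmin.1 hk2 Hr hr.
have degF : forall (W : finType) (F : rel W) (kF : nat), graph_iso E F ->
    (forall y, #|[set z | F y z]| = kF) -> k = kF.
  move=> W F kF Hi HF; have [y Hy] := iso_deg Hi x1; by rewrite -(Hk x1) Hy HF.
have KmIff : forall a, graph_iso E (Kmult a m) ->
    (graph_energy E = graph_energy (compl_graph E) <-> a = m).
  move=> a Hi.
  have HN : #|V| = (a * m)%N by rewrite (iso_card Hi) Kmult_card.
  have Hk' : k = ((a - 1) * m)%N := degF _ _ _ Hi (@Kmult_deg a m).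
  have ha : (1 <= a)%N by move: hk1; rewrite Hk'; case: a {Hi HN Hk'} => //.
  have Hr : (0:algC) * (m%:R * (#|V|%:R - 1) - k%:R) = k%:R * (#|V|%:R - k%:R - m%:R).
    by rewrite HN Hk' !natrM (natrB _ ha); ring.
  rewrite (key 0 Hr (lexx 0)) HN Hk' !natrM (natrB _ ha).
  split => [H|->]; last by ring.
  have : (m%:R : algC) * (a%:R - m%:R) = 0.
    by move/eqP: H; rewrite -subr_eq0 => /eqP H; rewrite -H; ring.
  move/eqP; rewrite mulf_eq0 pnatr_eq0 subr_eq0 eqr_nat => /orP[/eqP Hm0|/eqP //].
  by rewrite Hm0 in hm.
have LSeq : forall n (O : 'I_m -> 'I_(n ^ 2) -> 'I_n), is_OA O -> graph_iso E (LS_graph O) ->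
    (2 <= n)%N /\ graph_energy E = graph_energy (compl_graph E).
  move=> n O HO Hi.
  have HN : #|V| = (n ^ 2)%N by rewrite (iso_card Hi) card_ord.
  have Hk' : k = (m * (n - 1))%N := degF _ _ _ Hi (LS_deg hm HO).
  have hn : (2 <= n)%N by move: hk2; rewrite HN Hk'; nia.
  have hmn : (m <= n)%N by move: hk2; rewrite HN Hk'; nia.
  have hn1 : (1 <= n)%N by lia.
  split => //.
  have Hr : ((n - m)%:R : algC) * (m%:R * (#|V|%:R - 1) - k%:R) = k%:R * (#|V|%:R - k%:R - m%:R).
    by rewrite HN Hk' natrX !natrM !natrB //; ring.
  rewrite (key _ Hr (ler0n _ _)) HN Hk' natrX !natrM !natrB //; ring.
split => [H|].
- case: Hclass => [[a [ha Hi]]|[[n [O [HO Hi]]]|[n [B [HB Hi]]]]].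
  + by left; move/(KmIff a Hi): H => Ham; rewrite Ham in Hi.
  + by right; exists n, O; have [hn _] := LSeq n O HO Hi.
  + exfalso.
    have HNB := steiner_card hm HB.
    rewrite -(iso_card Hi) in HNB.
    have Hk' : k = (m * n)%N := degF _ _ _ Hi (steiner_deg hm HB).
    have hmn : (m <= n)%N.
      rewrite leqNgt; apply/negP => hnm.
      have [t Ht] : exists t, m = (n + 1 + t)%N by exists (m - n - 1)%N; lia.
      exact: (steiner_nat hm hk2 HNB Hk' Ht).
    have hnv : (n <= m * n + m)%N.
      by apply: leq_trans (leq_addr m _); rewrite leq_pmull //; lia.
    have hrel : (#|V|%:R * m%:R : algC) = (m%:R * n%:R + m%:R - n%:R) * (n%:R + 1).
      by rewrite -natrM HNB natrM natrB // !natrD natrM.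
    have Hr : ((n - m)%:R : algC) * (m%:R * (#|V|%:R - 1) - k%:R) = k%:R * (#|V|%:R - k%:R - m%:R).
      rewrite Hk' natrM natrB //.
      apply/eqP; rewrite -subr_eq0; apply/eqP.
      transitivity (- m%:R * (#|V|%:R * m%:R - (m%:R * n%:R + m%:R - n%:R) * (n%:R + 1)) : algC).
        by ring.
      by rewrite hrel subrr mulr0.
    move/(key _ Hr (ler0n _ _)): H; rewrite Hk' natrM natrB // => /eqP; rewrite -subr_eq0 => /eqP H.
    have : (n%:R * (n%:R + 1 - m%:R) : algC) = 0.
      transitivity ((m%:R * n%:R * (#|V|%:R + (n%:R - m%:R) - m%:R * n%:R) -
        (#|V|%:R - 1 - m%:R * n%:R) * (m%:R + m%:R * n%:R)) +
        (#|V|%:R * m%:R - (m%:R * n%:R + m%:R - n%:R) * (n%:R + 1)) : algC).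
        by ring.
      by rewrite H hrel subrr addr0.
    have hm1 : (m <= n + 1)%N by lia.
    have e1 : (n%:R + 1 - m%:R : algC) = (n + 1 - m)%:R by rewrite (natrB _ hm1) natrD.
    move/eqP; rewrite e1 -natrM pnatr_eq0 muln_eq0 => /orP[/eqP|/eqP]; lia.
- case => [Hi|[n [O [_ [HO Hi]]]]].
  + exact/(KmIff m Hi).
  + by have [_ ->] := LSeq n O HO Hi.
Qed.
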